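(* The graphs $C_3+(P_2\cup P_1)$ and $P_3+P_3$ are of class $\mathcal C_0$.
   Context: All graphs are finite, simple and undirected. $C_n$ and $P_n$ denote the cycle and the path on $n$ vertices; $G_1\cup G_2$ is the disjoint union. The join $G+H$ is obtained from vertex-disjoint copies of $G$ and $H$ by adding all edges between $V(G)$ and $V(H)$. A drawing is 1-planar if each edge is crossed at most once (adjacent edges never cross, no edge crosses itself); a graph is 1-planar if it has such a drawing. For a 1-planar drawing $D$, $D^\times$ is the plane graph obtained by turning each crossing into a new degree-4 vertex (a false vertex); $N_{D^\times}(c)$ is the neighbour set of a false vertex $c$. A 1-planar graph is of class $\mathcal C_0$ if it has a 1-planar drawing $D$ with $|N_{D^\times}(c_1)\cap N_{D^\times}(c_2)|=0$ for all distinct false vertices $c_1,c_2$. *)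

(* Defs.v *)
From mathcomp Require Import all_boot.
From Stdlib Require Import Reals.
Set Implicit Arguments. Unset Strict Implicit. Unset Printing Implicit Defensive.

(** Finite simple graphs: a finite vertex type and an adjacency relation
    (all concrete graphs below are symmetric and irreflexive by construction). *)
Record graph := Graph { vert : finType; adj : rel vert }.

Definition cycle_graph (n : nat) : graph :=
  @Graph 'I_n (fun i j => ((i.+1 %% n == j) || (j.+1 %% n == i)) && (i != j)).
Definition path_graph (n : nat) : graph :=
  @Graph 'I_n (fun i j => (i.+1 == j :> nat) || (j.+1 == i :> nat)).

Definition dunion (G H : graph) : graph :=
  @Graph (vert G + vert H)%type (fun x y =>
    match x, y with
    | inl a, inl b => adj a b
    | inr a, inr b => adj a b
    | _, _ => false
    end).
Definition gjoin (G H : graph) : graph :=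
  @Graph (vert G + vert H)%type (fun x y =>
    match x, y with
    | inl a, inl b => adj a b
    | inr a, inr b => adj a b
    | _, _ => true
    end).

(** Drawings in the plane R^2: vertices are points, the edge uv is a
    Jordan arc [0,1] -> R^2 given by [arc u v] (the same curve traversed
    backwards for [arc v u]). *)
Definition point := (R * R)%type.

Local Open Scope R_scope.

Definition same_edge (V : Type) (u v x y : V) : Prop :=
  (u = x /\ v = y) \/ (u = y /\ v = x).

Definition good_drawing (G : graph) (pos : vert G -> point)
    (arc : vert G -> vert G -> R -> point) : Prop :=
  (forall a b : vert G, pos a = pos b -> a = b) /\
  forall u v : vert G, adj u v ->
    arc u v 0 = pos u /\ arc u v 1 = pos v /\
    (forall t, 0 <= t <= 1 -> arc v u t = arc u v (1 - t)) /\
    (forall t, 0 <= t <= 1 ->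
        continuity_pt (fun s => fst (arc u v s)) t /\
        continuity_pt (fun s => snd (arc u v s)) t) /\
    (forall s t, 0 <= s <= 1 -> 0 <= t <= 1 -> arc u v s = arc u v t -> s = t) /\
    (forall t (w : vert G), 0 < t < 1 -> arc u v t <> pos w).

(** p is a crossing point of the distinct edges uv and xy (a false vertex of D^x):
    a common point of their interiors. *)
Definition crossing (G : graph) (arc : vert G -> vert G -> R -> point)
    (u v x y : vert G) (p : point) : Prop :=
  adj u v /\ adj x y /\ ~ same_edge u v x y /\
  exists s t, 0 < s < 1 /\ 0 < t < 1 /\ arc u v s = p /\ arc x y t = p.

Definition one_planar_drawing (G : graph) (pos : vert G -> point)
    (arc : vert G -> vert G -> R -> point) : Prop :=
  good_drawing pos arc /\
  (forall u v x y p, crossing arc u v x y p ->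
      u <> x /\ u <> y /\ v <> x /\ v <> y) /\
  (forall u v x y p x' y' p', crossing arc u v x y p -> crossing arc u v x' y' p' ->
      p = p' /\ same_edge x y x' y').

(** Neighbourhood in D^x of the false vertex at the crossing of uv and xy. *)
Definition false_nbr (V : Type) (u v x y w : V) : Prop :=
  w = u \/ w = v \/ w = x \/ w = y.

Definition class_C0 (G : graph) : Prop :=
  exists (pos : vert G -> point) (arc : vert G -> vert G -> R -> point),
    one_planar_drawing pos arc /\
    forall u v x y p u' v' x' y' p',
      crossing arc u v x y p -> crossing arc u' v' x' y' p' -> p <> p' ->
      forall w, false_nbr u v x y w -> ~ false_nbr u' v' x' y' w.

(* Main.v *)
Require Import Defs.
From mathcomp Require Import all_boot.
From Stdlib Require Import Reals Lra.
Open Scope R_scope.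

Definition seg (P Q : point) (t : R) : point :=
  (fst P + t * (fst Q - fst P), snd P + t * (snd Q - snd P)).

Lemma seg_cont P Q t : continuity_pt (fun s => fst (seg P Q s)) t /\
   continuity_pt (fun s => snd (seg P Q s)) t.
Proof. unfold seg; simpl; split; reg. Qed.

Definition G1 := gjoin (cycle_graph 3) (dunion (path_graph 2) (path_graph 1)).
Notation a0 := (@inl 'I_3 ('I_2 + 'I_1) (@Ordinal 3 0 (erefl true))).
Notation a1 := (@inl 'I_3 ('I_2 + 'I_1) (@Ordinal 3 1 (erefl true))).
Notation a2 := (@inl 'I_3 ('I_2 + 'I_1) (@Ordinal 3 2 (erefl true))).
Notation a3 := (@inr 'I_3 ('I_2 + 'I_1) (@inl 'I_2 'I_1 (@Ordinal 2 0 (erefl true)))).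
Notation a4 := (@inr 'I_3 ('I_2 + 'I_1) (@inl 'I_2 'I_1 (@Ordinal 2 1 (erefl true)))).
Notation a5 := (@inr 'I_3 ('I_2 + 'I_1) (@inr 'I_2 'I_1 (@Ordinal 1 0 (erefl true)))).

Lemma V1_cases (v : vert G1) : v = a0 \/ v = a1 \/ v = a2 \/ v = a3 \/ v = a4 \/ v = a5.
Proof.
case: v => [i|[i|i]]; case: i => [[|[|[|n]]] Hi] //=;
 rewrite ?(eq_irrelevance Hi (erefl true)); tauto.
Qed.

Ltac vc1 v := destruct (V1_cases v) as [ -> | [ -> | [ -> | [ -> | [ -> | -> ] ] ] ] ].

Definition pos1 (v : vert G1) : point :=
  match v with
  | inl i => match nat_of_ord i with 0%nat => (4,1) | 1%nat => (4,4) | _ => (6,6) end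
  | inr (inl i) => match nat_of_ord i with 0%nat => (0,5) | _ => (2,5) end
  | inr (inr _) => (5,4)
  end.
Definition arc1 (u v : vert G1) := seg (pos1 u) (pos1 v).

Lemma noadj {G : graph} {u v : vert G} : adj u v -> adj u v = false -> False.
Proof. by move=> ->. Qed.

Ltac kill_adj H := first [ exfalso; exact (noadj H (erefl _)) | idtac ].

Lemma good1 : good_drawing pos1 arc1.
Proof.
split.
- intros a b; vc1 a; vc1 b; intro H; try reflexivity; injection H; intros; lra.
- intros u v Huv; split; [|split; [|split; [|split; [|split]]]].
  + unfold arc1, seg; destruct (pos1 u); simpl; f_equal; ring.
  + unfold arc1, seg; destruct (pos1 u), (pos1 v); simpl; f_equal; ring.
  + intros t _; unfold arc1, seg; destruct (pos1 u), (pos1 v); simpl; f_equal; ring.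
  + intros; apply seg_cont.
  + intros s t _ _; vc1 u; vc1 v; kill_adj Huv; unfold arc1, seg; simpl;
      intro H; injection H; intros; lra.
  + intros t w Ht; vc1 u; vc1 v; kill_adj Huv; vc1 w; unfold arc1, seg; simpl;
      intro H; injection H; intros; lra.
Qed.

Ltac same_tac := first [ left; split; reflexivity | right; split; reflexivity ].

Lemma char1 {u v x y p} : crossing arc1 u v x y p ->
  ((same_edge u v a0 a4 /\ same_edge x y a1 a3) \/
   (same_edge u v a1 a3 /\ same_edge x y a0 a4)) /\ p = (16/7, 31/7).
Proof.
intros [Huv [Hxy [Hne [s [t [Hs [Ht [E1 E2]]]]]]]]; subst p.
vc1 u; vc1 v; kill_adj Huv; vc1 x; vc1 y; kill_adj Hxy;
  try (exfalso; apply Hne; same_tac);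
  unfold arc1, seg in E2 |- *; simpl in E2 |- *; injection E2; intros;
  first [ exfalso; lra
        | split; [ first [left; split; same_tac | right; split; same_tac]
                 | f_equal; lra ] ].
Qed.

Ltac dse H := destruct H as [[? ?]|[? ?]]; subst.

Lemma C0_1 : class_C0 G1.
Proof.
exists pos1, arc1; split; [split; [exact good1|split]|].
- intros u v x y p Hc; destruct (char1 Hc) as [[[E1 E2]|[E1 E2]] _];
  dse E1; dse E2; repeat split; discriminate.
- intros u v x y p x' y' p' Hc Hc';
  destruct (char1 Hc) as [HH ->]; destruct (char1 Hc') as [HH' ->]; split; [reflexivity|].
  unfold same_edge in *;
  destruct HH as [[E1 E2]|[E1 E2]]; destruct HH' as [[E1' E2']|[E1' E2']];
  destruct E1 as [[? ?]|[? ?]]; destruct E2 as [[? ?]|[? ?]];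
  destruct E1' as [[? ?]|[? ?]]; destruct E2' as [[? ?]|[? ?]];
  first [left; split; congruence | right; split; congruence | exfalso; congruence].
- intros u v x y p u' v' x' y' p' Hc Hc' Hp;
  destruct (char1 Hc) as [_ ->]; destruct (char1 Hc') as [_ ->]; congruence.
Qed.

Definition G2 := gjoin (path_graph 3) (path_graph 3).
Notation b0 := (@inl 'I_3 'I_3 (@Ordinal 3 0 (erefl true))).
Notation b1 := (@inl 'I_3 'I_3 (@Ordinal 3 1 (erefl true))).
Notation b2 := (@inl 'I_3 'I_3 (@Ordinal 3 2 (erefl true))).
Notation b3 := (@inr 'I_3 'I_3 (@Ordinal 3 0 (erefl true))).
Notation b4 := (@inr 'I_3 'I_3 (@Ordinal 3 1 (erefl true))).
Notation b5 := (@inr 'I_3 'I_3 (@Ordinal 3 2 (erefl true))).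

Lemma V2_cases (v : vert G2) : v = b0 \/ v = b1 \/ v = b2 \/ v = b3 \/ v = b4 \/ v = b5.
Proof.
case: v => [i|i]; case: i => [[|[|[|n]]] Hi] //=;
 rewrite ?(eq_irrelevance Hi (erefl true)); tauto.
Qed.

Ltac vc2 v := destruct (V2_cases v) as [ -> | [ -> | [ -> | [ -> | [ -> | -> ] ] ] ] ].

Definition pos2 (v : vert G2) : point :=
  match v with
  | inl i => match nat_of_ord i with 0%nat => (2,5) | 1%nat => (2,6) | _ => (6,4) end
  | inr i => match nat_of_ord i with 0%nat => (4,4) | 1%nat => (1,2) | _ => (0,1) end
  end.
Definition arc2 (u v : vert G2) := seg (pos2 u) (pos2 v).


Lemma good2 : good_drawing pos2 arc2.
Proof.
split.
- intros a b; vc2 a; vc2 b; intro H; try reflexivity; injection H; intros; lra.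
- intros u v Huv; split; [|split; [|split; [|split; [|split]]]].
  + unfold arc2, seg; destruct (pos2 u); simpl; f_equal; ring.
  + unfold arc2, seg; destruct (pos2 u), (pos2 v); simpl; f_equal; ring.
  + intros t _; unfold arc2, seg; destruct (pos2 u), (pos2 v); simpl; f_equal; ring.
  + intros; apply seg_cont.
  + intros s t _ _; vc2 u; vc2 v; kill_adj Huv; unfold arc2, seg; simpl;
      intro H; injection H; intros; lra.
  + intros t w Ht; vc2 u; vc2 v; kill_adj Huv; vc2 w; unfold arc2, seg; simpl;
      intro H; injection H; intros; lra.
Qed.


Lemma char2 {u v x y p} : crossing arc2 u v x y p ->
  ((same_edge u v b0 b5 /\ same_edge x y b1 b4) \/
   (same_edge u v b1 b4 /\ same_edge x y b0 b5)) /\ p = (3/2, 4).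
Proof.
intros [Huv [Hxy [Hne [s [t [Hs [Ht [E1 E2]]]]]]]]; subst p.
vc2 u; vc2 v; kill_adj Huv; vc2 x; vc2 y; kill_adj Hxy;
  try (exfalso; apply Hne; same_tac);
  unfold arc2, seg in E2 |- *; simpl in E2 |- *; injection E2; intros;
  first [ exfalso; lra
        | split; [ first [left; split; same_tac | right; split; same_tac]
                 | f_equal; lra ] ].
Qed.


Lemma C0_2 : class_C0 G2.
Proof.
exists pos2, arc2; split; [split; [exact good2|split]|].
- intros u v x y p Hc; destruct (char2 Hc) as [[[E1 E2]|[E1 E2]] _];
  dse E1; dse E2; repeat split; discriminate.
- intros u v x y p x' y' p' Hc Hc';
  destruct (char2 Hc) as [HH ->]; destruct (char2 Hc') as [HH' ->]; split; [reflexivity|].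
  unfold same_edge in *;
  destruct HH as [[E1 E2]|[E1 E2]]; destruct HH' as [[E1' E2']|[E1' E2']];
  destruct E1 as [[? ?]|[? ?]]; destruct E2 as [[? ?]|[? ?]];
  destruct E1' as [[? ?]|[? ?]]; destruct E2' as [[? ?]|[? ?]];
  first [left; split; congruence | right; split; congruence | exfalso; congruence].
- intros u v x y p u' v' x' y' p' Hc Hc' Hp;
  destruct (char2 Hc) as [_ ->]; destruct (char2 Hc') as [_ ->]; congruence.
Qed.

Theorem lemma7 :
  class_C0 (gjoin (cycle_graph 3) (dunion (path_graph 2) (path_graph 1))) /\
  class_C0 (gjoin (path_graph 3) (path_graph 3)).
Proof. exact (conj C0_1 C0_2). Qed.
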